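(* Let $G$ be a finite simple connected graph. Suppose that all the holes in $G$ are pairwise edge-disjoint and that $G$ has exactly one non-edge maximal clique $K$. Then a cycle $C$ in $G$ is a hole if and only if $|V(K)\cap V(C)|\le 2$.
   Context: A hole of a graph is an induced (chordless) cycle of length at least $4$. A clique is a complete subgraph; a clique $K$ is non-edge if $|V(K)|\ge 3$. Cycles have length at least $3$. *)

(* Defs.v *)
From mathcomp Require Import all_boot.
Set Implicit Arguments. Unset Strict Implicit. Unset Printing Implicit Defensive.

Section Graphs.
Variables (T : finType) (e : rel T).

Definition simple_graph : Prop := symmetric e /\ irreflexive e.

Definition connected_graph : Prop := forall x y : T, connect e x y.

Definition is_cycle (c : seq T) : Prop :=
  [/\ uniq c, 3 <= size c & path.cycle e c].

Definition cycle_edge (c : seq T) (x y : T) : bool :=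
  (x \in c) && (y \in c) && ((y == next c x) || (x == next c y)).

Definition is_hole (c : seq T) : Prop :=
  [/\ is_cycle c, 4 <= size c &
      forall x y, x \in c -> y \in c -> e x y -> cycle_edge c x y].

(* Two cycles are the same subgraph iff they have the same edge set
   (hence the same vertex set). *)
Definition same_cycle (c1 c2 : seq T) : Prop :=
  forall x y, cycle_edge c1 x y = cycle_edge c2 x y.

Definition holes_edge_disjoint : Prop :=
  forall c1 c2, is_hole c1 -> is_hole c2 ->
    (exists x y, cycle_edge c1 x y /\ cycle_edge c2 x y) -> same_cycle c1 c2.

Definition is_clique (K : {set T}) : Prop :=
  forall x y, x \in K -> y \in K -> x != y -> e x y.

Definition is_maximal_clique (K : {set T}) : Prop :=
  is_clique K /\ forall K' : {set T}, is_clique K' -> K \subset K' -> K' = K.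

(* A non-edge clique has at least 3 vertices. *)
Definition is_nonedge_maximal_clique (K : {set T}) : Prop :=
  is_maximal_clique K /\ 3 <= #|K|.

End Graphs.

(* Main.v *)
From Stdlib Require Import Classical.
Require Import Defs.
From mathcomp Require Import all_boot.
Set Implicit Arguments. Unset Strict Implicit. Unset Printing Implicit Defensive.

Lemma next_mid (T : finType) (c1 c2 : seq T) (u v : T) : uniq (c1 ++ u :: v :: c2) ->
  next (c1 ++ u :: v :: c2) u = v.
Proof.
move=> U; rewrite next_nth mem_cat inE eqxx orbT.
case: c1 U => [|y c1] U.
  by rewrite /= eqxx.
move: U => /= /andP[yn U].
have yu : (y == u) = false.
  by apply/negbTE; apply: contra yn => /eqP ->; rewrite mem_cat mem_head orbT.
have un : u \notin c1.
  move: U; rewrite cat_uniq => /and3P[_ H _]; apply: contra H => H.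
  by apply/hasP; exists u => //; rewrite mem_head.
by rewrite yu index_cat (negbTE un) /= eqxx addn0 nth_cat ltnNge leqnSn subSnn.
Qed.
Lemma next_lastel (T : finType) (y : T) c u : uniq (y :: rcons c u) ->
  next (y :: rcons c u) u = y.
Proof.
move=> U; rewrite next_nth.
have -> : u \in y :: rcons c u by rewrite inE mem_rcons mem_head orbT.
rewrite /=.
move: U => /= /andP[yn U].
have yu : (y == u) = false.
  by apply/negbTE; apply: contra yn => /eqP ->; rewrite mem_rcons mem_head.
rewrite yu nth_default // -cats1 index_cat.
have un : u \notin c.
  move: U; rewrite -cats1 cat_uniq => /and3P[_ H _]; apply: contra H => H.
  by apply/hasP; exists u => //; rewrite mem_head.
by rewrite (negbTE un) /= eqxx addn0 size_cat /= addn1.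
Qed.
Lemma cycle_edge_rot (T : finType) n (c : seq T) x y : uniq c ->
  cycle_edge (rot n c) x y = cycle_edge c x y.
Proof. by move=> U; rewrite /cycle_edge !mem_rot !next_rot. Qed.

Lemma cycle_edge_sym (T : finType) (c : seq T) x y :
  cycle_edge c x y = cycle_edge c y x.
Proof. by rewrite /cycle_edge orbC [(x \in c) && _]andbC. Qed.

Lemma three_adj (T : finType) (C : seq T) a b c : uniq C -> 4 <= size C ->
  a \in C -> b != c ->
  cycle_edge C a b -> cycle_edge C a c -> cycle_edge C b c -> False.
Proof.
move=> U S aC bc.
have [i s R] := rot_to aC.
rewrite -!(cycle_edge_rot i _ _ U) R.
have UD : uniq (a :: s) by rewrite -R rot_uniq.
have SD : 4 <= size (a :: s) by rewrite -R size_rot.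
move: UD SD; clear R U S aC.
case: s => [|h t] //; case/lastP: t => [|m l] //; case: m => [|m1 m'] //.
move=> UD _.
set D := [:: a, h & rcons (m1 :: m') l] in UD *.
have nu : next D a = h := @next_mid _ [::] (rcons (m1 :: m') l) a h UD.
have nl : next D l = a := @next_lastel _ a (h :: m1 :: m') l UD.
have nh : next D h = m1 := @next_mid _ [:: a] (rcons m' l) h m1 UD.
have inj : injective (next D) by apply: can_inj (prev_next UD).
have ah : a != h.
  by move: UD => /= /andP[H _]; apply: contra H => /eqP ->; rewrite inE eqxx.
have hl : h != l.
  by move: UD => /= /and3P[_ H _]; apply: contra H => /eqP ->; rewrite inE mem_rcons mem_head orbT.
have m1l : m1 != l.
  by move: UD => /= /and4P[_ _ H _]; apply: contra H => /eqP ->; rewrite mem_rcons mem_head.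
have nb : forall z, cycle_edge D a z -> z = h \/ z = l.
  move=> z /andP[_ /orP[/eqP ->|/eqP E]]; first by left; rewrite nu.
  by right; apply: inj; rewrite nl.
have hl' : forall x y, x = h -> y = l -> ~~ cycle_edge D x y.
  move=> x y -> ->; rewrite /cycle_edge nh nl.
  by rewrite eq_sym (negbTE m1l) eq_sym (negbTE ah) !andbF.
change [:: a, h, m1 & rcons m' l] with D.
move=> /nb[] Eb /nb[] Ec; subst b c; rewrite ?eqxx // in bc.
- by move/negP: (hl' _ _ erefl erefl).
- by rewrite cycle_edge_sym; move/negP: (hl' _ _ erefl erefl).
Qed.
Section Main.
Variables (T : finType) (e : rel T) (K : {set T}).
Hypothesis Hs : simple_graph e.
Hypothesis Hd : holes_edge_disjoint e.
Hypothesis HK : forall K' : {set T}, is_nonedge_maximal_clique e K' <-> K' = K.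

Definition fK (C : seq T) := #|[set x in K | x \in C]|.

Lemma size_le_card (A : {set T}) s : uniq s -> {subset s <= A} -> size s <= #|A|.
Proof. by move=> U S; rewrite -(card_uniqP U); apply: subset_leq_card; apply/subsetP. Qed.

Lemma f_mono C1 C2 : {subset C1 <= C2} -> fK C1 <= fK C2.
Proof.
move=> S; apply: subset_leq_card; apply/subsetP=> x; rewrite !inE => /andP[-> /S ->].
by [].
Qed.

Definition cliqueb (A : {set T}) :=
  [forall x, forall y, (x \in A) ==> (y \in A) ==> (x != y) ==> e x y].

Lemma cliqueP A : reflect (is_clique e A) (cliqueb A).
Proof.
apply: (iffP idP).
  by move=> /forallP H x y xA yA xy; move/forallP: (H x) => /(_ y); rewrite xA yA xy.
by move=> H; apply/forallP=> x; apply/forallP=> y; apply/implyP=> xA; apply/implyP=> yA;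
  apply/implyP=> xy; apply: H.
Qed.

Lemma clique_sub_K (A : {set T}) : is_clique e A -> 3 <= #|A| -> A \subset K.
Proof.
move=> cA cardA.
have [B mB AB] := maxset_exists (P := cliqueb) (C := A) (introT (cliqueP A) cA).
have : is_nonedge_maximal_clique e B.
  split; last by apply: leq_trans cardA (subset_leq_card AB).
  split; first by apply/cliqueP; exact: maxsetp mB.
  by move=> K' cK' BK'; apply: (maxsetsup mB) => //; apply/cliqueP.
by move/HK => <-.
Qed.

Lemma tri_K (C : seq T) : is_cycle e C -> size C = 3 -> 3 <= fK C.
Proof.
case: Hs => sym irr.
case: C => [|a [|b [|c [|d C]]]] // [U _ Cy] _.
move: Cy => /=; rewrite andbT => /and3P[ab bc ca].
have cl : is_clique e [set x | x \in [:: a; b; c]].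
  move=> x y; rewrite !inE => /or3P[]/eqP-> /or3P[]/eqP-> //; rewrite ?eqxx //;
    by rewrite ?(sym b a) ?(sym c b) ?(sym a c) ?ab ?bc ?ca.
have S3 : 3 <= #|[set x | x \in [:: a; b; c]]|.
  by apply: (size_le_card (s := [:: a; b; c])) => // x xs; rewrite inE.
have sK := clique_sub_K cl S3.
apply: (size_le_card (s := [:: a; b; c])) => // x xC.
rewrite inE xC andbT; apply: (subsetP sK); by rewrite inE.
Qed.


Lemma nonhole n : forall C, size C <= n -> is_cycle e C -> ~ is_hole e C -> 3 <= fK C.
Proof.
case: Hs => sym irr.
elim: n => [|n IH] C.
  by move=> Sz [_ S3 _]; move: (leq_trans S3 Sz).
move=> Sz [U S3 Cy] NH.
case: (ltngtP (size C) 3) => [|S4|E3]; first by rewrite ltnNge S3.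
  2: by apply: tri_K.
have [x [y [xC [yC [exy nce]]]]] :
    exists x y, x \in C /\ y \in C /\ e x y /\ ~~ cycle_edge C x y.
  apply: NNPP => N; apply: NH; split => // x y xC yC exy.
  case E: (cycle_edge C x y) => //; exfalso; apply: N; exists x, y.
  by rewrite E.
have [i s R] := rot_to xC.
have UC' : uniq (x :: s) by rewrite -R rot_uniq.
have CyC' : cycle e (x :: s) by rewrite -R rot_cycle.
have nce' : ~~ cycle_edge (x :: s) x y by rewrite -R cycle_edge_rot.
have subC : {subset (x :: s) <= C} by move=> z; rewrite -R mem_rot.
have sizeC : size (x :: s) = size C by rewrite -R size_rot.
have yx : y != x by apply: contraTneq exy => ->; rewrite irr.
have ys : y \in s.
  by move: yC; rewrite -(mem_rot i) R inE (negbTE yx).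
clear R.
case/splitPr: ys UC' CyC' nce' subC sizeC => s1 s2 UC' CyC' nce' subC sizeC.
case: s1 UC' CyC' nce' subC sizeC => [|a s1'] UC' CyC' nce' subC sizeC.
  by move: nce'; rewrite /cycle_edge (@next_mid _ [::] s2 x y UC') eqxx /= !inE !eqxx orbT.
case: s2 UC' CyC' nce' subC sizeC => [|b s2'] UC' CyC' nce' subC sizeC.
  move: nce' UC'; rewrite cats1 => nce' UC'.
  by move: nce'; rewrite /cycle_edge (next_lastel UC') eqxx mem_head !inE mem_rcons mem_head !orbT.
set s1 := a :: s1' in UC' CyC' nce' subC sizeC.
set s2 := b :: s2' in UC' CyC' nce' subC sizeC.
set C1 := x :: rcons s1 y.
set C2 := x :: y :: s2.
have sub1 : subseq C1 (x :: s1 ++ y :: s2).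
  rewrite /C1 -cats1; apply: (@cat_subseq _ (x :: s1) [:: y] (x :: s1) (y :: s2)).
    exact: subseq_refl.
  by rewrite /= eqxx ?sub0seq.
have sub2 : subseq C2 (x :: s1 ++ y :: s2).
  apply: (@cat_subseq _ [:: x] (y :: s2) (x :: s1) (y :: s2)); last exact: subseq_refl.
  by rewrite /= eqxx ?sub0seq.
have U1 : uniq C1 := subseq_uniq sub1 UC'.
have U2 : uniq C2 := subseq_uniq sub2 UC'.
have m1 : {subset C1 <= C} by move=> z /(mem_subseq sub1) /subC.
have m2 : {subset C2 <= C} by move=> z /(mem_subseq sub2) /subC.
move: CyC'; rewrite /= rcons_cat cat_path => /andP[P1 /= /andP[ely P2]].
have Cy1 : cycle e C1.
  by move: ely P2; rewrite /C1 /= !rcons_path P1 last_rcons (sym y x) exy => -> /and3P[-> _ _].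
have Cy2 : cycle e C2 by case/and3P: P2 => _ yb pb; rewrite /C2 /= exy yb pb.
have S1 : size C1 < size C.
  by rewrite -sizeC /C1 /= size_rcons size_cat /= !addnS !ltnS leq_addr.
have S2 : size C2 < size C.
  by rewrite -sizeC /C2 /= size_cat /= ltnS ltnS leq_addl.
have IC1 : is_cycle e C1 by split => //; rewrite /C1 /= size_rcons.
have IC2 : is_cycle e C2 by split.
have ce1 : cycle_edge C1 x y.
  by rewrite /cycle_edge (next_lastel U1) eqxx mem_head /C1 inE mem_rcons mem_head orbT orbT.
have ce2 : cycle_edge C2 x y.
  by rewrite /cycle_edge (@next_mid _ [::] s2 x y U2) eqxx /C2 !inE !eqxx orbT.
have aC2 : a \notin C2.
  have ax : a != x.
    by move: UC' => /= /andP[H _]; apply: contra H => /eqP->; rewrite inE eqxx.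
  have ays : a \notin y :: s2.
    by move: UC' => /= /and3P[_ H _]; apply: contra H => H; rewrite mem_cat H orbT.
  by rewrite /C2 in_cons negb_or ax.
have aC1 : a \in C1 by rewrite /C1 inE mem_rcons !inE eqxx !orbT.
have hn : ~ (is_hole e C1 /\ is_hole e C2).
  move=> [H1 H2]; have SC := Hd H1 H2 (ex_intro _ x (ex_intro _ y (conj ce1 ce2))).
  have := SC a (next C1 a); rewrite {1}/cycle_edge aC1 mem_next aC1 eqxx /=.
  by rewrite /cycle_edge (negbTE aC2).
case: (classic (is_hole e C1)) => H1.
  case: (classic (is_hole e C2)) => H2; first by exfalso; apply: hn.
  apply: leq_trans (IH C2 _ IC2 H2) (f_mono m2).
  by rewrite -ltnS (leq_trans S2 Sz).
apply: leq_trans (IH C1 _ IC1 H1) (f_mono m1).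
by rewrite -ltnS (leq_trans S1 Sz).
Qed.

End Main.

Unset Implicit Arguments.
Theorem lemma2 (T : finType) (e : rel T) (K : {set T}) :
  simple_graph e -> connected_graph e ->
  holes_edge_disjoint e ->
  (forall K' : {set T}, is_nonedge_maximal_clique e K' <-> K' = K) ->
  forall C : seq T, is_cycle e C ->
    (is_hole e C <-> #|[set x in K | x \in C]| <= 2).
Proof.
move=> Hs _ Hd HK C IC; split.
  move=> [[U _ _] S4 Ch]; rewrite leqNgt; apply/negP => G3.
  have cK : is_clique e K by have [[]] := (proj2 (HK K)) erefl.
  have memS : forall z, z \in enum [set x in K | x \in C] -> z \in K /\ z \in C.
    by move=> z; rewrite mem_enum inE => /andP[].
  have Ue := enum_uniq [set x in K | x \in C].
  move: G3 memS Ue; rewrite cardE.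
  case: (enum _) => [|a [|b [|c r]]] // _ memS Ue.
  have [aK aC] := memS a (mem_head _ _).
  have [bK bC] : b \in K /\ b \in C by apply: memS; rewrite !inE eqxx ?orbT.
  have [cK' cC] : c \in K /\ c \in C by apply: memS; rewrite !inE eqxx ?orbT.
  move: Ue => /= /andP[]; rewrite !inE !negb_or => /andP[ab /andP[ac _]] /andP[/andP[bc _] _].
  apply: (three_adj U S4 aC bc).
  - by apply: Ch => //; apply: cK.
  - by apply: Ch => //; apply: cK.
  - by apply: Ch => //; apply: cK.
move=> Hf; apply: NNPP => NH.
have := @nonhole T e K Hs Hd HK (size C) C (leqnn _) IC NH.
by rewrite /fK leqNgt ltnS Hf.
Qed.
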